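(* Let $g\colon\mathbb X\to\mathbb Y$ be continuously differentiable, $D\subset\mathbb Y$ closed, $\Phi(x):=g(x)-D$, $(\bar x,0)\in\operatorname{gph}\Phi$, $u\in\mathbb S_{\mathbb X}$, and let $\{e_1,\dots,e_m\}$ be an orthonormal basis of $\mathbb Y$. Then $\Phi$ is quasi-normal in direction $u$ at $(\bar x,0)$ w.r.t. $\{e_1,\dots,e_m\}$ if and only if there does not exist a nonzero $\lambda\in\mathcal N_D(g(\bar x);\nabla g(\bar x)u)$ with $\nabla g(\bar x)^*\lambda=0$ for which there are sequences $\{x_k\}\subset\mathbb X$ with $x_k\ne\bar x$, $\{z_k\}\subset D$, $\{\lambda_k\}\subset\mathbb Y$ with $x_k\to\bar x$, $z_k\to g(\bar x)$, $\lambda_k\to\lambda$, $(x_k-\bar x)/\|x_k-\bar x\|\to u$, $(z_k-g(\bar x))/\|x_k-\bar x\|\to\nabla g(\bar x)u$, and, for all $k$ and $i$, $\lambda_k\in\widehat{\mathcal N}_D(z_k)$ and $\langle\lambda,e_i\rangle\langle g(x_k)-z_k,e_i\rangle>0$ whenever $\langle\lambda,e_i\rangle\ne0$.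
   Context: $\nabla g(\bar x)$ is the derivative (linear map), $\nabla g(\bar x)^*$ its adjoint. $\widehat{\mathcal N}_D$ regular normal cone, $\mathcal N_D(y;v)$ directional limiting normal cone (all limits of $\eta_k\in\widehat{\mathcal N}_D(y+t_kv_k)$ with $v_k\to v$, $t_k\searrow0$). Quasi-normality in direction $u$ at $(\bar x,\bar y)$ w.r.t. $\{e_i\}$: there is no nonzero $\lambda$ with $0\in D^*\Phi((\bar x,\bar y);(u,0))(\lambda)$ (directional limiting coderivative, i.e. $(0,-\lambda)\in\mathcal N_{\operatorname{gph}\Phi}((\bar x,\bar y);(u,0))$) for which there exist $\{(x_k,y_k)\}\subset\operatorname{gph}\Phi$ with $x_k\ne\bar x$, $\{\lambda_k\}\subset\mathbb Y$, $\{\eta_k\}\subset\mathbb X$ with $x_k\to\bar x$, $y_k\to\bar y$, $\lambda_k\to\lambda$, $\eta_k\to0$, $(x_k-\bar x)/\|x_k-\bar x\|\to u$, $(y_k-\bar y)/\|x_k-\bar x\|\to0$, $\eta_k\in\widehat D^*\Phi(x_k,y_k)(\lambda_k)$ (regular coderivative), and $\langle\lambda,e_i\rangle\langle y_k-\bar y,e_i\rangle>0$ whenever $\langle\lambda,e_i\rangle\ne0$. *)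

(* Defs.v *)
(* Finite-dimensional Euclidean spaces X, Y are modelled as row vectors
   'rV[R]_n, 'rV[R]_m with the standard dot product and Euclidean norm.
   Sequence convergence uses the library topology on matrices
   (equivalent to the Euclidean one). *)
From HB Require Import structures.
From mathcomp Require Import all_boot all_order all_algebra.
From mathcomp Require Import all_classical all_reals all_analysis.
Set Implicit Arguments. Unset Strict Implicit. Unset Printing Implicit Defensive.
Import Order.TTheory GRing.Theory Num.Theory.
Import numFieldNormedType.Exports.
Local Open Scope classical_set_scope.
Local Open Scope ring_scope.

Section Defs.
Variable R : realType.

Definition dotv (k : nat) (u v : 'rV[R]_k) : R := (u *m v^T) 0 0.

Definition enorm (k : nat) (v : 'rV[R]_k) : R := Num.sqrt (dotv v v).

Definition rnormal (k : nat) (C : set 'rV[R]_k) (y : 'rV[R]_k) : set 'rV[R]_k :=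
  [set eta | C y /\
    forall eps : R, 0 < eps -> exists2 delta : R, 0 < delta &
      forall y', C y' -> enorm (y' - y) < delta ->
        dotv eta (y' - y) <= eps * enorm (y' - y)].

Definition dlnormal (k : nat) (C : set 'rV[R]_k) (y v : 'rV[R]_k) : set 'rV[R]_k :=
  [set eta | exists (t : nat -> R) (vk etak : nat -> 'rV[R]_k),
    [/\ (forall j, 0 < t j), t @ \oo --> (0 : R), vk @ \oo --> v,
        etak @ \oo --> eta &
        forall j, rnormal C (y + t j *: vk j) (etak j)]].

(* the graph of a set-valued map X => Y, embedded in R^(n+m) via row_mx *)
Definition gph_set (n m : nat) (G : 'rV[R]_n -> 'rV[R]_m -> Prop) : set 'rV[R]_(n + m) :=
  [set z | G (lsubmx z) (rsubmx z)].

Definition rcoder (n m : nat) (G : 'rV[R]_n -> 'rV[R]_m -> Prop)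
  (x : 'rV[R]_n) (y lam : 'rV[R]_m) : set 'rV[R]_n :=
  [set eta | rnormal (gph_set G) (row_mx x y) (row_mx eta (- lam))].

Definition dlcoder (n m : nat) (G : 'rV[R]_n -> 'rV[R]_m -> Prop)
  (x : 'rV[R]_n) (y : 'rV[R]_m) (u : 'rV[R]_n) (v lam : 'rV[R]_m) : set 'rV[R]_n :=
  [set eta | dlnormal (gph_set G) (row_mx x y) (row_mx u v) (row_mx eta (- lam))].

Definition quasi_normal_dir (n m : nat) (G : 'rV[R]_n -> 'rV[R]_m -> Prop)
  (xb : 'rV[R]_n) (yb : 'rV[R]_m) (u : 'rV[R]_n) (e : 'I_m -> 'rV[R]_m) : Prop :=
  ~ exists lam : 'rV[R]_m,
      [/\ lam != 0, dlcoder G xb yb u 0 lam 0 &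
        exists (xk : nat -> 'rV[R]_n) (yk lamk : nat -> 'rV[R]_m) (etak : nat -> 'rV[R]_n),
          (forall k, G (xk k) (yk k) /\ xk k != xb) /\
          xk @ \oo --> xb /\ yk @ \oo --> yb /\ lamk @ \oo --> lam /\
          etak @ \oo --> (0 : 'rV[R]_n) /\
          (fun k => (enorm (xk k - xb))^-1 *: (xk k - xb)) @ \oo --> u /\
          (fun k => (enorm (xk k - xb))^-1 *: (yk k - yb)) @ \oo --> (0 : 'rV[R]_m) /\
          (forall k, rcoder G (xk k) (yk k) (lamk k) (etak k)) /\
          (forall k (i : 'I_m), dotv lam (e i) != 0 ->
             0 < dotv lam (e i) * dotv (yk k - yb) (e i))].

Definition C1 (n m : nat) (g : 'rV[R]_n -> 'rV[R]_m) : Prop :=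
  (forall x, differentiable g x) /\
  continuous (fun x => lin1_mx ('d g x)).

Definition adjoint (n m : nat) (L : 'rV[R]_n -> 'rV[R]_m) (lam : 'rV[R]_m) : 'rV[R]_n :=
  lam *m (lin1_mx L)^T.

(* the map Phi(x) = g(x) - D, as its graph relation *)
Definition PhiG (n m : nat) (g : 'rV[R]_n -> 'rV[R]_m) (D : set 'rV[R]_m)
  (x : 'rV[R]_n) (y : 'rV[R]_m) : Prop := D (g x - y).

End Defs.

(* Main.v *)
Require Import Defs.
From HB Require Import structures.
From mathcomp Require Import all_boot all_order all_algebra.
From mathcomp Require Import all_classical all_reals all_analysis.
From mathcomp Require Import ring lra.
Import Order.TTheory GRing.Theory Num.Theory.
Import numFieldNormedType.Exports.
Local Open Scope classical_set_scope.
Local Open Scope ring_scope.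
Set Implicit Arguments. Unset Strict Implicit. Unset Printing Implicit Defensive.

Lemma entry_le {R : realType} (m n : nat) (A : 'M[R]_(m,n)) i j : `|A i j| <= `|A|.
Proof.
rewrite [leRHS]/Num.Def.normr /= mx_normrE.
by apply: le_trans (le_bigmax _ _ (i, j)).
Qed.

Lemma mx_norm_le {R : realType} (m n : nat) (A : 'M[R]_(m,n)) c :
  0 <= c -> (forall i j, `|A i j| <= c) -> `|A| <= c.
Proof.
move=> c0 H; rewrite [leLHS]/Num.Def.normr /= mx_normrE.
by apply: bigmax_le => // -[i j] _; exact: H.
Qed.

Lemma cvg_entry {R : realType} (m n : nat) (A : nat -> 'M[R]_(m,n)) (B : 'M[R]_(m,n)) i j :
  A @ \oo --> B -> (fun k => A k i j) @ \oo --> B i j.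
Proof. by move=> h; exact: (@continuous_cvg _ _ _ _ _ A (fun M : 'M[R]_(m,n) => M i j) B (@coord_continuous R m n i j B) h). Qed.

Lemma cvg_entries {R : realType} (m n : nat) (A : nat -> 'M[R]_(m,n)) (B : 'M[R]_(m,n)) :
  (forall i j, (fun k => A k i j) @ \oo --> B i j) -> A @ \oo --> B.
Proof.
move=> h; apply/cvgrPdist_le => e e0.
have : \forall k \near \oo, forall ij : 'I_m * 'I_n, `|B ij.1 ij.2 - A k ij.1 ij.2| <= e.
  apply: filter_forall => ij; exact: (cvgrPdist_le _ _).1 (h ij.1 ij.2) e e0.
apply: filter_app; near=> k => H.
apply: mx_norm_le; first exact: ltW.
by move=> i j; rewrite !mxE; exact: (H (i, j)).
Unshelve. all: by end_near. Qed.

Section dotv_lemmas.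
Variable R : realType.
Variable k : nat.
Implicit Types u v w : 'rV[R]_k.

Lemma dotvE u v : dotv u v = \sum_i u 0 i * v 0 i.
Proof. by rewrite /dotv !mxE; apply: eq_bigr => i _; rewrite mxE. Qed.

Lemma dotvC u v : dotv u v = dotv v u.
Proof. by rewrite !dotvE; apply: eq_bigr => i _; rewrite mulrC. Qed.

Lemma dotvDl u v w : dotv (u + v) w = dotv u w + dotv v w.
Proof. by rewrite /dotv mulmxDl mxE. Qed.

Lemma dotvZl (a : R) u w : dotv (a *: u) w = a * dotv u w.
Proof. by rewrite /dotv -scalemxAl mxE. Qed.

Lemma dotvNl u w : dotv (- u) w = - dotv u w.
Proof. by rewrite /dotv mulNmx mxE. Qed.

Lemma dotvBl u v w : dotv (u - v) w = dotv u w - dotv v w.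
Proof. by rewrite dotvDl dotvNl. Qed.

Lemma dotvDr u v w : dotv w (u + v) = dotv w u + dotv w v.
Proof. by rewrite dotvC dotvDl !(dotvC w). Qed.

Lemma dotvZr (a : R) u w : dotv w (a *: u) = a * dotv w u.
Proof. by rewrite dotvC dotvZl dotvC. Qed.

Lemma dotvNr u w : dotv w (- u) = - dotv w u.
Proof. by rewrite dotvC dotvNl dotvC. Qed.

Lemma dotvBr u v w : dotv w (u - v) = dotv w u - dotv w v.
Proof. by rewrite dotvDr dotvNr. Qed.

Lemma dotv0l w : dotv 0 w = 0.
Proof. by rewrite /dotv mul0mx mxE. Qed.

Lemma dotv0r w : dotv w 0 = 0.
Proof. by rewrite dotvC dotv0l. Qed.

Lemma dotv_ge0 v : 0 <= dotv v v.
Proof. by rewrite dotvE; apply: sumr_ge0 => i _; rewrite -expr2 sqr_ge0. Qed.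

Lemma dotv_bound u v : `|dotv u v| <= k%:R * (`|u| * `|v|).
Proof.
rewrite dotvE; apply: le_trans (ler_norm_sum _ _ _) _.
have -> : k%:R * (`|u| * `|v|) = \sum_(i < k) (`|u| * `|v|).
  by rewrite sumr_const card_ord mulr_natl.
apply: ler_sum => i _; rewrite normrM.
by apply: ler_pM => //; apply: entry_le.
Qed.

Lemma enorm_ge0 v : 0 <= enorm v.
Proof. exact: sqrtr_ge0. Qed.

Lemma enorm_sq v : enorm v ^+ 2 = dotv v v.
Proof. by rewrite /enorm sqr_sqrtr // dotv_ge0. Qed.

Lemma norm_le_enorm v : `|v| <= enorm v.
Proof.
apply: mx_norm_le; first exact: enorm_ge0.
move=> i j; rewrite (ord1 i).
rewrite -(sqrtr_sqr (v 0 j)) /enorm; apply: ler_wsqrtr.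
rewrite dotvE (bigD1 j) //= -expr2 lerDl.
by apply: sumr_ge0 => l _; rewrite -expr2 sqr_ge0.
Qed.

Lemma enorm_le_norm v : enorm v <= k%:R * `|v|.
Proof.
rewrite /enorm -(@ger0_norm _ (k%:R * `|v|)) ?mulr_ge0 //.
rewrite -sqrtr_sqr; apply: ler_wsqrtr.
rewrite dotvE; apply: le_trans (_ : \sum_(i < k) `|v| ^+ 2 <= _).
  apply: ler_sum => i _; rewrite -expr2 -real_normK ?num_real //.
  by rewrite lerXn2r ?nnegrE // entry_le.
rewrite sumr_const card_ord -[`|v| ^+ 2 *+ k]mulr_natl exprMn.
apply: ler_wpM2r; first exact: sqr_ge0.
rewrite -natrX ler_nat; case: k => // n; rewrite expnS leq_pmulr //.
Qed.

Lemma enormN v : enorm (- v) = enorm v.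
Proof. by rewrite /enorm dotvNl dotvNr opprK. Qed.

Lemma enormB u v : enorm (u - v) = enorm (v - u).
Proof. by rewrite -enormN opprB. Qed.

Lemma enormZ (a : R) v : enorm (a *: v) = `|a| * enorm v.
Proof. by rewrite /enorm dotvZl dotvZr mulrA sqrtrM ?sqr_ge0 // -expr2 sqrtr_sqr. Qed.

Lemma enorm_eq0 v : enorm v = 0 -> v = 0.
Proof.
move=> h; apply/eqP; rewrite -normr_eq0 eq_le normr_ge0 andbT.
by rewrite -h norm_le_enorm.
Qed.

Lemma enorm0 : enorm (0 : 'rV[R]_k) = 0.
Proof. by rewrite /enorm dotv0l sqrtr0. Qed.

End dotv_lemmas.

Lemma dotv_row {R : realType} (n m : nat) (a c : 'rV[R]_n) (b d : 'rV[R]_m) :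
  dotv (row_mx a b) (row_mx c d) = dotv a c + dotv b d.
Proof. by rewrite /dotv tr_row_mx mul_row_col mxE. Qed.

Lemma enorm_row {R : realType} (n m : nat) (a : 'rV[R]_n) (b : 'rV[R]_m) :
  enorm (row_mx a b) ^+ 2 = enorm a ^+ 2 + enorm b ^+ 2.
Proof. by rewrite !enorm_sq dotv_row. Qed.

Lemma enorm_rowl {R : realType} (n m : nat) (a : 'rV[R]_n) (b : 'rV[R]_m) :
  enorm a <= enorm (row_mx a b).
Proof.
rewrite -(ler_pXn2r (isT : (0 < 2)%N)) ?nnegrE ?enorm_ge0 //.
by rewrite enorm_row lerDl sqr_ge0.
Qed.

Lemma enorm_rowr {R : realType} (n m : nat) (a : 'rV[R]_n) (b : 'rV[R]_m) :
  enorm b <= enorm (row_mx a b).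
Proof.
rewrite -(ler_pXn2r (isT : (0 < 2)%N)) ?nnegrE ?enorm_ge0 //.
by rewrite enorm_row lerDr sqr_ge0.
Qed.

Lemma enorm_row0 {R : realType} (n m : nat) (b : 'rV[R]_m) :
  enorm (row_mx (0 : 'rV[R]_n) b) = enorm b.
Proof.
by rewrite /enorm dotv_row dotv0l add0r.
Qed.

Lemma dotv_adj {R : realType} (n m : nat) (L : {linear 'rV[R]_n -> 'rV[R]_m}) lam h :
  dotv (adjoint L lam) h = dotv lam (L h).
Proof.
by rewrite /adjoint /dotv -mul_rV_lin1 trmx_mul mulmxA.
Qed.

Lemma cvgc {R : realType} (p q : nat) (c : 'M[R]_(p,q)) : (fun _ : nat => c) @ \oo --> c.
Proof. exact: cvg_cst. Qed.

Lemma cvg_sumr {R : realType} (k : nat) (f : 'I_k -> nat -> R) (a : 'I_k -> R) :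
  (forall i, f i @ \oo --> a i) ->
  (fun j => \sum_i f i j) @ \oo --> \sum_i a i.
Proof.
move=> h; apply: (@cvg_big _ _ +%R 0 xpredT _ _ _ _ _ _) => //.
exact: add_continuous.
Qed.

Lemma cvg_mulmx {R : realType} (p q r : nat) (A : nat -> 'M[R]_(p,q)) (B : nat -> 'M[R]_(q,r))
  (A0 : 'M[R]_(p,q)) (B0 : 'M[R]_(q,r)) :
  A @ \oo --> A0 -> B @ \oo --> B0 -> (fun j => A j *m B j) @ \oo --> A0 *m B0.
Proof.
move=> hA hB; apply: cvg_entries => i l.
rewrite mxE; under eq_cvg do rewrite mxE.
apply: cvg_sumr => c; apply: cvgM; exact: cvg_entry.
Qed.

Lemma cvg_trmx {R : realType} (p q : nat) (A : nat -> 'M[R]_(p,q)) (A0 : 'M[R]_(p,q)) :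
  A @ \oo --> A0 -> (fun j => (A j)^T) @ \oo --> A0^T.
Proof.
move=> hA; apply: cvg_entries => i l.
rewrite mxE; under eq_cvg do rewrite mxE. exact: cvg_entry.
Qed.

Lemma cvg_row_mx {R : realType} (p q : nat) (a : nat -> 'rV[R]_p) (b : nat -> 'rV[R]_q) (a0 : 'rV[R]_p) (b0 : 'rV[R]_q) :
  a @ \oo --> a0 -> b @ \oo --> b0 -> (fun j => row_mx (a j) (b j)) @ \oo --> row_mx a0 b0.
Proof.
move=> ha hb; apply: cvg_entries => i l.
rewrite -(splitK l); case: (fintype.split l) => l' /=.
  rewrite row_mxEl; under eq_cvg do rewrite row_mxEl. exact: cvg_entry.
rewrite row_mxEr; under eq_cvg do rewrite row_mxEr. exact: cvg_entry.
Qed.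

Lemma cvg_lsub {R : realType} (p q : nat) (w : nat -> 'rV[R]_(p + q)) (w0 : 'rV[R]_(p + q)) :
  w @ \oo --> w0 -> (fun j => lsubmx (w j)) @ \oo --> lsubmx w0.
Proof. move=> h; exact: (continuous_cvg _ (@continuous_lsubmx R 1 p q w0) h). Qed.

Lemma cvg_rsub {R : realType} (p q : nat) (w : nat -> 'rV[R]_(p + q)) (w0 : 'rV[R]_(p + q)) :
  w @ \oo --> w0 -> (fun j => rsubmx (w j)) @ \oo --> rsubmx w0.
Proof. move=> h; exact: (continuous_cvg _ (@continuous_rsubmx R 1 p q w0) h). Qed.

Lemma cvg_dotv {R : realType} (k : nat) (u v : nat -> 'rV[R]_k) (u0 v0 : 'rV[R]_k) :
  u @ \oo --> u0 -> v @ \oo --> v0 -> (fun j => dotv (u j) (v j)) @ \oo --> dotv u0 v0.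
Proof.
move=> hu hv; rewrite /dotv.
exact: (@cvg_entry R 1 1 _ _ 0 0 (cvg_mulmx hu (cvg_trmx hv))).
Qed.

Lemma cvg_enorm0 {R : realType} (k : nat) (v : nat -> 'rV[R]_k) :
  v @ \oo --> (0 : 'rV[R]_k) -> (fun j => enorm (v j)) @ \oo --> (0 : R).
Proof.
move=> h; apply/cvgrPdist_lt => e e0.
have k0 : 0 < k%:R + 1 :> R by rewrite ltr_wpDl.
near=> j.
have H : `|0 - v j| < e / (k%:R + 1).
  by near: j; exact: (cvgrPdist_lt _ _).1 h _ (divr_gt0 e0 k0).
rewrite sub0r normrN ger0_norm ?enorm_ge0 //.
apply: le_lt_trans (enorm_le_norm _) _.
rewrite sub0r normrN in H.
apply: le_lt_trans (_ : k%:R * `|v j| <= (k%:R + 1) * `|v j|) _.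
  by apply: ler_wpM2r => //; rewrite lerDl.
by rewrite mulrC -ltr_pdivlMr.
Unshelve. all: by end_near. Qed.

Lemma diff_littleo {R : realType} n m (g : 'rV[R]_n -> 'rV[R]_m) x :
  differentiable g x -> forall e, 0 < e ->
  \forall h \near (0 : 'rV[R]_n), `|g (h + x) - (g x + 'd g x h)| <= e * `|h|.
Proof.
move=> dg e e0; have := diff_locally dg; move/eqaddoP => H.
exact: (H e e0).
Qed.

Lemma DQ {R : realType} n m (g : 'rV[R]_n -> 'rV[R]_m) x (t : nat -> R)
  (a : nat -> 'rV[R]_n) (a0 : 'rV[R]_n) :
  differentiable g x -> (forall j, 0 < t j) -> t @ \oo --> (0 : R) -> a @ \oo --> a0 ->
  (fun j => (t j)^-1 *: (g (x + t j *: a j) - g x)) @ \oo --> 'd g x a0.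
Proof.
move=> dg tpos t0 ha.
have eq j : (t j)^-1 *: (g (x + t j *: a j) - g x) =
   'd g x (a j) + (t j)^-1 *: (g (t j *: a j + x) - (g x + 'd g x (t j *: a j))).
  rewrite linearZ /= (addrC (t j *: a j) x) opprD addrA [X in _ = _ + X]scalerBr scalerA mulVf ?gt_eqF // scale1r.
  by rewrite [RHS]addrC subrK.
rewrite (funext eq).
rewrite -[X in _ --> X]addr0; apply: cvgD.
  have hc : continuous ('d g x) by exact: diff_continuous.
  apply: (continuous_cvg _ (hc a0) ha).
apply/cvgr0Pnorm_lt => e e0.
have c0 : 0 < `|a0| + 2 by rewrite ltr_wpDl.
have hh : (fun j => t j *: a j) @ \oo --> (0 : 'rV[R]_n).
  by rewrite -(scale0r a0); apply: cvgZ.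
have P := hh _ (diff_littleo dg (divr_gt0 e0 c0)).
have Q : \forall j \near \oo, `|a0 - a j| < 1 by exact: (cvgrPdist_lt _ _).1 ha _ ltr01.
near=> j.
have Pj : `|g (t j *: a j + x) - (g x + 'd g x (t j *: a j))| <= e / (`|a0| + 2) * `|t j *: a j|.
  by near: j; exact: P.
have Qj : `|a0 - a j| < 1 by near: j; exact: Q.
rewrite normrZ ger0_norm ?invr_ge0 ?ltW //.
have tj := tpos j.
apply: le_lt_trans (_ : (t j)^-1 * (e / (`|a0| + 2) * `|t j *: a j|) < e).
  by rewrite ler_wpM2l // invr_ge0 ltW.
rewrite normrZ ger0_norm ?ltW //.
have -> : (t j)^-1 * (e / (`|a0| + 2) * (t j * `|a j|)) = e * (`|a j| / (`|a0| + 2)).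
  by field; rewrite ?gt_eqF.
have aj : `|a j| < `|a0| + 1.
  have := ler_normB a0 (a0 - a j); rewrite opprB addrC subrK.
  move=> h1; apply: le_lt_trans h1 _; rewrite -ltrBlDl.
  by rewrite (addrC `|a0|) addrK.
rewrite gtr_pMr // ltr_pdivrMr // mul1r.
by apply: lt_trans aj _; rewrite ltrD2l ltr1n.
Unshelve. all: by end_near. Qed.

Lemma gph_row {R : realType} n m (g : 'rV[R]_n -> 'rV[R]_m) D x y :
  gph_set (PhiG g D) (row_mx x y) = D (g x - y).
Proof. by rewrite /gph_set /PhiG /= row_mxKl row_mxKr. Qed.

Lemma reg_fwd_D {R : realType} n m (g : 'rV[R]_n -> 'rV[R]_m) D x y eta lam :
  rnormal (gph_set (PhiG g D)) (row_mx x y) (row_mx eta (- lam)) ->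
  rnormal D (g x - y) lam.
Proof.
move=> [Cw H]; split; first by rewrite -gph_row.
move=> e e0; have [d d0 Hd] := H e e0; exists d => // z' Dz' hz'.
have E : row_mx x (g x - z') - row_mx x y = row_mx 0 (- (z' - (g x - y))).
  by rewrite opp_row_mx add_row_mx subrr opprB addrAC.
have := Hd (row_mx x (g x - z')).
rewrite gph_row E enorm_row0 enormN dotv_row dotv0r add0r dotvNl dotvNr opprK.
apply.
  by rewrite opprB addrC subrK.
by [].
Qed.

Lemma reg_fwd_adj {R : realType} n m (g : 'rV[R]_n -> 'rV[R]_m) D x y eta lam :
  differentiable g x ->
  rnormal (gph_set (PhiG g D)) (row_mx x y) (row_mx eta (- lam)) ->
  eta = adjoint ('d g x) lam.
Proof.
move=> dg [Cw H].
set z := eta - adjoint ('d g x) lam.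
suff : z = 0 by move/eqP; rewrite subr_eq0 => /eqP.
apply: enorm_eq0; apply/eqP; rewrite -sqrf_eq0 enorm_sq.
set N := dotv z z.
have N0 : 0 <= N := dotv_ge0 z.
rewrite eq_le N0 andbT leNgt; apply/negP => Npos.
pose t := @harmonic R.
have tpos : forall j, 0 < t j by move=> j; exact: harmonic_gt0.
have t0 : t @ \oo --> (0 : R) := cvg_harmonic.
pose q j := (t j)^-1 *: (g (x + t j *: z) - g x).
have hq : q @ \oo --> 'd g x z by apply: DQ => //; exact: cvg_cst.
pose V j := row_mx z (q j).
pose V0 := row_mx z ('d g x z).
have hV : V @ \oo --> V0 by apply: cvg_row_mx => //; exact: cvg_cst.
pose K := (n + m)%:R * (`|V0| + 1).
have K0 : 0 <= K by rewrite mulr_ge0 // addr_ge0.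
pose eps := N / (2 * (K + 1)).
have eps0 : 0 < eps by rewrite divr_gt0 // mulr_gt0 // ltr_wpDl.
have [d d0 Hd] := H eps eps0.
have hW : (fun j => t j *: V j) @ \oo --> (0 : 'rV[R]_(n + m)).
  rewrite -(scale0r V0); exact: (cvgZ t0 hV).
have hE := cvg_enorm0 hW.
have hl : (fun j => dotv lam (q j - 'd g x z)) @ \oo --> (0 : R).
  have := cvg_dotv (@cvgc _ _ _ lam) (cvgB hq (@cvgc _ _ _ ('d g x z))).
  rewrite subrr dotv0r => h; exact: h.
have N2 : 0 < N / 2 by rewrite divr_gt0.
near \oo => j.
have f1 : `|0 - enorm (t j *: V j)| < d by near: j; exact: (cvgrPdist_lt _ _).1 hE _ d0.
have f2 : `|0 - dotv lam (q j - 'd g x z)| < N / 2.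
  by near: j; exact: (cvgrPdist_lt _ _).1 hl _ N2.
have f3 : `|V0 - V j| < 1 by near: j; exact: (cvgrPdist_lt _ _).1 hV _ ltr01.
rewrite sub0r normrN ger0_norm ?enorm_ge0 // in f1.
rewrite sub0r normrN dotvBr in f2.
have tj := tpos j.
have Gw : gph_set (PhiG g D) (row_mx (x + t j *: z) (y + (g (x + t j *: z) - g x))).
  rewrite gph_row; rewrite gph_row in Cw.
  have -> : g (x + t j *: z) - (y + (g (x + t j *: z) - g x)) = g x - y.
    by rewrite opprD opprB addrCA (addrC (g x)) addNKr addrC.
  exact: Cw.
have EW : row_mx (x + t j *: z) (y + (g (x + t j *: z) - g x)) - row_mx x y = t j *: V j.
  rewrite opp_row_mx add_row_mx scale_row_mx /q scalerA mulfV ?gt_eqF // scale1r.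
  by rewrite (addrC x) addrK (addrC y) addrK.
have := Hd _ Gw; rewrite EW => /(_ f1).
rewrite dotvZr enormZ (ger0_norm (ltW tj)) mulrCA ler_pM2l //.
rewrite dotv_row dotvNl.
have -> : eta = z + adjoint ('d g x) lam by rewrite /z subrK.
rewrite dotvDl dotv_adj -/N => ineq.
have hVj : enorm (V j) <= K.
  apply: le_trans (enorm_le_norm _) _; rewrite /K ler_wpM2l //.
  have := ler_normB V0 (V0 - V j); rewrite opprB addrC subrK => h1.
  by apply: le_trans h1 _; rewrite lerD2l ltW.
have e1 : eps * enorm (V j) <= eps * K by rewrite ler_wpM2l // ltW.
have e2 : eps * K < N / 2.
  rewrite /eps mulrAC ltr_pdivrMr ?mulr_gt0 ?ltr_wpDl //.
  have -> : N / 2 * (2 * (K + 1)) = N * (K + 1) by field.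
  by rewrite ltr_pM2l // ltrDl.
move: f2; rewrite ltr_norml => /andP[_ f2].
have : N < N.
  move: ineq e1 e2 f2.
  set B := eps * enorm _; set C := eps * K; set P := dotv lam (q j); set Q := dotv lam ('d g x z).
  lra.
by rewrite ltxx.
Unshelve. all: by end_near. Qed.

Lemma zz_id (V : zmodType) (G a L k y : V) : G - (k + y) - (a - y) = L + (G - (a + L)) - k.
Proof.
rewrite opprB opprD opprD.
have -> : G + (- k - y) + (y - a) = G - a - k.
  rewrite -addrA. 
  have -> : (- k - y) + (y - a) = - a - k by rewrite addrA subrK addrC.
  by rewrite addrA.
have -> : L + (G + (- a - L)) = G - a.
  by rewrite addrCA (addrCA L) subrr addr0.
by [].
Qed.

Lemma reg_bwd {R : realType} n m (g : 'rV[R]_n -> 'rV[R]_m) D x y lam :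
  differentiable g x -> rnormal D (g x - y) lam ->
  rnormal (gph_set (PhiG g D)) (row_mx x y) (row_mx (adjoint ('d g x) lam) (- lam)).
Proof.
move=> dg [Dz HD]; split; first by rewrite gph_row.
have hc : continuous ('d g x) by exact: diff_continuous.
have [K K0 HK] := linear_lipschitz hc.
move=> eps e0.
pose c := m%:R * (K + 2) + 1.
have c0 : 0 < c by rewrite ltr_wpDl // mulr_ge0 // addr_ge0 // ltW.
have [d1 d10 H1] := HD (eps / (2 * c)) (divr_gt0 e0 (mulr_gt0 (ltr0Sn _ 1) c0)).
pose l := m%:R * `|lam|.
have l0 : 0 <= l by rewrite mulr_ge0.
pose e2 := Num.min 1 (eps / (2 * (l + 1))).
have e20 : 0 < e2 by rewrite lt_min ltr01 divr_gt0 // mulr_gt0 // ltr_wpDl.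
have e21 : e2 <= 1 by rewrite ge_min lexx.
have e22 : e2 <= eps / (2 * (l + 1)) by rewrite ge_min lexx orbT.
have [d2 d20 H2] := nbhs_norm0P.1 (diff_littleo dg e20).
exists (Num.min d2 (d1 / c)); first by rewrite lt_min d20 divr_gt0.
move=> w' Gw' hw'.
set E := enorm (w' - row_mx x y).
have E0 : 0 <= E := enorm_ge0 _.
set h := lsubmx w' - x.
set k := rsubmx w' - y.
have Ew : w' - row_mx x y = row_mx h k.
  by rewrite -{1}(hsubmxK w') opp_row_mx add_row_mx.
have hE : `|h| <= E.
  by apply: le_trans (norm_le_enorm _) _; rewrite /E Ew enorm_rowl.
have kE : `|k| <= E.
  by apply: le_trans (norm_le_enorm _) _; rewrite /E Ew enorm_rowr.
have Eltd2 : E < d2 by apply: lt_le_trans hw' _; rewrite ge_min lexx.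
have Eltd1 : E < d1 / c by apply: lt_le_trans hw' _; rewrite ge_min lexx orbT.
have Hr : `|g (h + x) - (g x + 'd g x h)| <= e2 * `|h|.
  by apply: H2; rewrite /= (le_lt_trans hE).
set r := g (h + x) - (g x + 'd g x h) in Hr.
have xh : lsubmx w' = h + x by rewrite /h subrK.
have yk : rsubmx w' = k + y by rewrite /k subrK.
have Dz' : D (g (h + x) - (k + y)).
  by move: Gw'; rewrite /gph_set /PhiG /= xh yk.
have zz : g (h + x) - (k + y) - (g x - y) = 'd g x h + r - k.
  by rewrite /r (zz_id _ _ ('d g x h)).
have nz : `|'d g x h + r - k| <= (K + 2) * E.
  apply: le_trans (ler_normB _ _) _.
  apply: le_trans (lerD (ler_normD _ _) (lexx _)) _.
  have h1 := HK h.
  have h2 : `|r| <= E.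
    apply: le_trans Hr _; apply: le_trans (_ : 1 * `|h| <= _); last by rewrite mul1r.
    by apply: ler_wpM2r.
  have h3 : K * `|h| <= K * E by apply: ler_wpM2l => //; exact: ltW.
  rewrite mulrDl mulr_natl mulr2n addrA.
  by apply: lerD; [apply: lerD; [exact: le_trans h1 h3 | exact: h2] | exact: kE].
have enz : enorm ('d g x h + r - k) <= m%:R * ((K + 2) * E).
  by apply: le_trans (enorm_le_norm _) _; rewrite ler_wpM2l.
have enz2 : enorm ('d g x h + r - k) <= c * E.
  apply: le_trans enz _; rewrite mulrA ler_wpM2r // lerDl //.
have cE : c * E < d1 by rewrite mulrC -ltr_pdivlMr.
have H1' := H1 _ Dz'; rewrite zz in H1'.
have D1 := H1' (le_lt_trans enz2 cE).
have lr : `|dotv lam r| <= eps / 2 * E.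
  apply: le_trans (dotv_bound _ _) _.
  rewrite mulrA -/l.
  apply: le_trans (_ : l * (e2 * E) <= _).
    apply: ler_wpM2l => //; apply: le_trans Hr _; apply: ler_wpM2l => //; exact: ltW.
  rewrite mulrA ler_wpM2r //.
  apply: le_trans (_ : l * (eps / (2 * (l + 1))) <= _); first by rewrite ler_wpM2l.
  rewrite mulrA ler_pdivrMr ?mulr_gt0 ?ltr_wpDl //.
  have -> : eps / 2 * (2 * (l + 1)) = eps * (l + 1) by field.
  by rewrite mulrC ler_pM2l // lerDl.
rewrite Ew dotv_row dotv_adj dotvNl.
have : dotv lam ('d g x h) - dotv lam k = dotv lam ('d g x h + r - k) - dotv lam r.
  by rewrite (dotvBr ('d g x h + r) k lam) (dotvDr ('d g x h) r lam) (addrAC (dotv lam ('d g x h))) addrK.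
move=> ->.
have D1' : eps / (2 * c) * enorm ('d g x h + r - k) <= eps / 2 * E.
  apply: le_trans (_ : eps / (2 * c) * (c * E) <= _).
    by rewrite ler_wpM2l // divr_ge0 ?mulr_ge0 ?ltW.
  have -> : eps / (2 * c) * (c * E) = eps / 2 * E by field; rewrite gt_eqF.
  by [].
move: D1 D1' lr; rewrite ler_norml.
set A := dotv lam _; set B := dotv lam r.
move=> D1 D1' /andP[lr1 lr2].
have : eps / 2 * E + eps / 2 * E = eps * E by field.
lra.
Qed.

Lemma cvg_adj {R : realType} n m (g : 'rV[R]_n -> 'rV[R]_m) (xk : nat -> 'rV[R]_n)
  (x0 : 'rV[R]_n) (mu : nat -> 'rV[R]_m) (mu0 : 'rV[R]_m) :
  C1 g -> xk @ \oo --> x0 -> mu @ \oo --> mu0 ->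
  (fun j => adjoint ('d g (xk j)) (mu j)) @ \oo --> adjoint ('d g x0) mu0.
Proof.
move=> [_ hc] hx hm; rewrite /adjoint; apply: cvg_mulmx hm (cvg_trmx _).
exact: (continuous_cvg _ (hc x0) hx).
Qed.

Lemma DQ2 {R : realType} n m (g : 'rV[R]_n -> 'rV[R]_m) (xk : nat -> 'rV[R]_n) xb u :
  differentiable g xb -> (forall k, xk k != xb) -> xk @ \oo --> xb ->
  (fun k => (enorm (xk k - xb))^-1 *: (xk k - xb)) @ \oo --> u ->
  (fun k => (enorm (xk k - xb))^-1 *: (g (xk k) - g xb)) @ \oo --> 'd g xb u.
Proof.
move=> dg hne hx hu.
have spos : forall k, 0 < enorm (xk k - xb).
  move=> k; rewrite lt_neqAle enorm_ge0 andbT eq_sym; apply/eqP => /enorm_eq0/eqP.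
  by rewrite subr_eq0 (negbTE (hne k)).
have s0 : (fun k => enorm (xk k - xb)) @ \oo --> (0 : R).
  apply: cvg_enorm0; rewrite -(subrr xb); apply: cvgB => //; exact: cvgc.
have := DQ dg spos s0 hu.
have E k : xb + enorm (xk k - xb) *: ((enorm (xk k - xb))^-1 *: (xk k - xb)) = xk k.
  by rewrite scalerA mulfV ?gt_eqF // scale1r addrC subrK.
by rewrite (funext (fun k => congr1 (fun v => (enorm (xk k - xb))^-1 *: (g v - g xb)) (E k))).
Qed.

Lemma dlc_fwd {R : realType} n m (g : 'rV[R]_n -> 'rV[R]_m) D xb u lam :
  C1 g -> dlcoder (PhiG g D) xb 0 u 0 lam 0 ->
  dlnormal D (g xb) ('d g xb u) lam /\ adjoint ('d g xb) lam = 0.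
Proof.
move=> hg [t [vk [etak [tpos t0 hv he hN]]]].
have dg x : differentiable g x := hg.1 x.
pose a j := lsubmx (vk j); pose b j := rsubmx (vk j).
pose eta j := lsubmx (etak j); pose mu j := - rsubmx (etak j).
have ha : a @ \oo --> u by have := cvg_lsub hv; rewrite row_mxKl.
have hb : b @ \oo --> (0 : 'rV[R]_m) by have := cvg_rsub hv; rewrite row_mxKr.
have heta : eta @ \oo --> (0 : 'rV[R]_n) by have := cvg_lsub he; rewrite row_mxKl.
have hmu : mu @ \oo --> lam by have := cvgN (cvg_rsub he); rewrite row_mxKr opprK => h; exact: h.
have pt j : row_mx xb 0 + t j *: vk j = row_mx (xb + t j *: a j) (t j *: b j).
  by rewrite -{1}(hsubmxK (vk j)) scale_row_mx add_row_mx add0r.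
have nr j : etak j = row_mx (eta j) (- mu j) by rewrite opprK hsubmxK.
have hN' j : rnormal (gph_set (PhiG g D)) (row_mx (xb + t j *: a j) (t j *: b j))
    (row_mx (eta j) (- mu j)) by rewrite -pt -nr; exact: hN.
have hD j := reg_fwd_D (hN' j).
have hA j := reg_fwd_adj (dg _) (hN' j).
split.
  exists t, (fun j => (t j)^-1 *: (g (xb + t j *: a j) - g xb) - b j), mu; split => //.
    rewrite -(subr0 ('d g xb u)); apply: cvgB => //; exact: DQ.
  move=> j.
  have -> : g xb + t j *: ((t j)^-1 *: (g (xb + t j *: a j) - g xb) - b j) =
      g (xb + t j *: a j) - t j *: b j.
    by rewrite scalerBr scalerA mulfV ?gt_eqF // scale1r addrA (addrC (g xb)) subrK.
  exact: hD.
have hx : (fun j => xb + t j *: a j) @ \oo --> xb.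
  rewrite -{2}(addr0 xb); apply: cvgD; first exact: cvgc.
  by rewrite -(scale0r u); apply: cvgZ.
have h1 : eta @ \oo --> adjoint ('d g xb) lam.
  by rewrite (funext hA); exact: cvg_adj hg hx hmu.
exact: (cvg_unique (@norm_hausdorff _ _) h1 heta).
Qed.

Lemma dlc_bwd {R : realType} n m (g : 'rV[R]_n -> 'rV[R]_m) D xb u lam :
  C1 g -> dlnormal D (g xb) ('d g xb u) lam -> adjoint ('d g xb) lam = 0 ->
  dlcoder (PhiG g D) xb 0 u 0 lam 0.
Proof.
move=> hg [t [v [mu [tpos t0 hv hmu hN]]]] hadj.
have dg x : differentiable g x := hg.1 x.
pose b j := (t j)^-1 *: (g (xb + t j *: u) - g xb) - v j.
have hb : b @ \oo --> (0 : 'rV[R]_m).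
  rewrite -(subrr ('d g xb u)); apply: cvgB => //; apply: DQ => //; exact: cvgc.
have hx : (fun j => xb + t j *: u) @ \oo --> xb.
  rewrite -{2}(addr0 xb); apply: cvgD; first exact: cvgc.
  by rewrite -(scale0r u); apply: cvgZ => //; exact: cvgc.
exists t, (fun j => row_mx u (b j)),
  (fun j => row_mx (adjoint ('d g (xb + t j *: u)) (mu j)) (- mu j)); split => //.
- by apply: cvg_row_mx => //; exact: cvgc.
- rewrite -hadj; apply: cvg_row_mx; first exact: cvg_adj hg hx hmu.
  exact: cvgN.
move=> j; rewrite scale_row_mx add_row_mx add0r.
apply: reg_bwd; first exact: dg.
have -> : g (xb + t j *: u) - t j *: b j = g xb + t j *: v j.
  rewrite /b scalerBr scalerA mulfV ?gt_eqF // scale1r opprB addrC.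
  by rewrite opprB addrA subrK addrC.
exact: hN.
Qed.

Unset Implicit Arguments. Set Strict Implicit.

Theorem mainTheorem6 (R : realType) (n m : nat)
  (g : 'rV[R]_n -> 'rV[R]_m) (D : set 'rV[R]_m) (xb u : 'rV[R]_n)
  (e : 'I_m -> 'rV[R]_m) :
  C1 g -> closed D -> PhiG g D xb 0 -> enorm u = 1 ->
  (forall i j : 'I_m, dotv (e i) (e j) = (i == j)%:R) ->
  (quasi_normal_dir (PhiG g D) xb 0 u e <->
   ~ exists lam : 'rV[R]_m,
       [/\ lam != 0, dlnormal D (g xb) ('d g xb u) lam,
           adjoint ('d g xb) lam = 0 &
         exists (xk : nat -> 'rV[R]_n) (zk lamk : nat -> 'rV[R]_m),
           (forall k, xk k != xb /\ D (zk k)) /\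
           xk @ \oo --> xb /\ zk @ \oo --> g xb /\ lamk @ \oo --> lam /\
           (fun k => (enorm (xk k - xb))^-1 *: (xk k - xb)) @ \oo --> u /\
           (fun k => (enorm (xk k - xb))^-1 *: (zk k - g xb)) @ \oo --> 'd g xb u /\
           (forall k, rnormal D (zk k) (lamk k) /\
                  forall i : 'I_m, dotv lam (e i) != 0 ->
                    0 < dotv lam (e i) * dotv (g (xk k) - zk k) (e i))]).
Proof.
move=> hg clD Dx0 hu horth.
have dg x : differentiable g x := hg.1 x.
have gc : {for xb, continuous g} := differentiable_continuous (dg xb).
have ggc (xk : nat -> 'rV[R]_n) : xk @ \oo --> xb -> (fun k => g (xk k)) @ \oo --> g xb.
  by move=> hx; exact: (continuous_cvg _ gc hx).
split.
  move=> QN [lam [lam0 hdl hadj [xk [zk [lamk [hk [hx [hz [hl [hdir [hzdir hN]]]]]]]]]]].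
  apply: QN; exists lam; split => //; first exact: dlc_bwd.
  exists xk, (fun k => g (xk k) - zk k), lamk, (fun k => adjoint ('d g (xk k)) (lamk k)).
  split.
    move=> k; split; last exact: (hk k).1.
    by rewrite /PhiG opprB addrC subrK; exact: (hk k).2.
  split; first exact: hx.
  split.
    rewrite -(subrr (g xb)); apply: cvgB => //; exact: ggc.
  split; first exact: hl.
  split.
    by rewrite -hadj; exact: cvg_adj hg hx hl.
  split; first exact: hdir.
  split.
    have E k : (enorm (xk k - xb))^-1 *: (g (xk k) - zk k - 0) =
        (enorm (xk k - xb))^-1 *: (g (xk k) - g xb) - (enorm (xk k - xb))^-1 *: (zk k - g xb).
      by rewrite subr0 -scalerBr opprB addrA subrK.
    rewrite (funext E) -(subrr ('d g xb u)); apply: cvgB => //.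
    by apply: DQ2 => // k; exact: (hk k).1.
  split.
    move=> k; rewrite /rcoder /=; apply: reg_bwd; first exact: dg.
    by rewrite opprB addrC subrK; exact: (hN k).1.
  by move=> k i; rewrite subr0; exact: (hN k).2 i.
move=> nR [lam [lam0 hdlc [xk [yk [lamk [etak [hk [hx [hy [hl [he [hdir [hydir [hrc hsg]]]]]]]]]]]]]].
have [hdl hadj] := dlc_fwd hg hdlc.
apply: nR; exists lam; split => //.
exists xk, (fun k => g (xk k) - yk k), lamk.
split.
  by move=> k; split; [exact: (hk k).2 | exact: (hk k).1].
split; first exact: hx.
split.
  rewrite -(subr0 (g xb)); apply: cvgB => //; exact: ggc.
split; first exact: hl.
split; first exact: hdir.
split.
  have E k : (enorm (xk k - xb))^-1 *: (g (xk k) - yk k - g xb) =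
      (enorm (xk k - xb))^-1 *: (g (xk k) - g xb) - (enorm (xk k - xb))^-1 *: (yk k - 0).
    by rewrite subr0 -scalerBr addrAC.
  rewrite (funext E) -(subr0 ('d g xb u)); apply: cvgB => //.
  by apply: DQ2 => // k; exact: (hk k).2.
move=> k; split; first exact: reg_fwd_D (hrc k).
move=> i hi; have := hsg k i hi.
by rewrite subr0 opprB addrC subrK.
Qed.
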